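(* Let $\mathsf{MRK}$ be the axiom scheme $\neg\forall\alpha\mathsf{P}\to\exists\alpha\mathsf{P}^\bot$ for atomic $\mathsf{P}$. (1) Every instance of $\mathsf{MRK}$ is provable in $\mathsf{HA}+\mathsf{EM}^-$. (2) Conversely, the rule $\mathsf{EM}^-$ is derivable in $\mathsf{HA}+\mathsf{MRK}$: for every formula $A$ and atomic $\mathsf{P}$, if $\Gamma,A\vdash\exists\alpha\mathsf{P}$ and $\Gamma,\neg A\vdash\exists\alpha\mathsf{P}$ in $\mathsf{HA}+\mathsf{MRK}$, then $\Gamma\vdash\exists\alpha\mathsf{P}$ in $\mathsf{HA}+\mathsf{MRK}$.
   Context: $\mathsf{HA}$ is intuitionistic first-order arithmetic (Heyting arithmetic, in natural deduction) over $0,\mathsf{S},+,\cdot,=$ with the Peano axioms and induction scheme; atomic formulas are decidable and $\mathsf{P}^\bot$ denotes the complementary atomic predicate of $\mathsf{P}$ (so $\mathsf{P}^\bot\equiv\neg\mathsf{P}$). $\mathsf{HA}+\mathsf{EM}^-$ is $\mathsf{HA}$ extended with the rule $\mathsf{EM}^-$: for an arbitrary formula $A$ and atomic $\mathsf{P}$, from $\Gamma,A\vdash\exists x\mathsf{P}$ and $\Gamma,\neg A\vdash\exists x\mathsf{P}$ infer $\Gamma\vdash\exists x\mathsf{P}$ (discharging $A$ and $\neg A$). $\mathsf{HA}+\mathsf{MRK}$ is $\mathsf{HA}$ with the instances of $\mathsf{MRK}$ as additional axioms. *)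

(* Defs.v *)
From Stdlib Require Import List.
Import ListNotations.

Inductive term : Type :=
| var : nat -> term
| zero : term
| succ : term -> term
| plus : term -> term -> term
| mult : term -> term -> term.

Inductive atom : Type :=
| Eq : term -> term -> atom
| Neq : term -> term -> atom.

Definition compl (p : atom) : atom :=
  match p with
  | Eq t s => Neq t s
  | Neq t s => Eq t s
  end.

Inductive form : Type :=
| Atom : atom -> form
| Bot : form
| Imp : form -> form -> form
| And : form -> form -> form
| Or : form -> form -> form
| All : form -> form     (* binds de Bruijn variable 0 *)
| Ex : form -> form.

Definition Not (A : form) : form := Imp A Bot.

Fixpoint tsubst (s : nat -> term) (t : term) : term :=
  match t with
  | var n => s n
  | zero => zero
  | succ u => succ (tsubst s u)
  | plus u v => plus (tsubst s u) (tsubst s v)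
  | mult u v => mult (tsubst s u) (tsubst s v)
  end.

Definition up (s : nat -> term) : nat -> term :=
  fun n => match n with
           | 0 => var 0
           | S k => tsubst (fun m => var (S m)) (s k)
           end.

Definition asubst (s : nat -> term) (p : atom) : atom :=
  match p with
  | Eq t u => Eq (tsubst s t) (tsubst s u)
  | Neq t u => Neq (tsubst s t) (tsubst s u)
  end.

Fixpoint fsubst (s : nat -> term) (A : form) : form :=
  match A with
  | Atom p => Atom (asubst s p)
  | Bot => Bot
  | Imp B C => Imp (fsubst s B) (fsubst s C)
  | And B C => And (fsubst s B) (fsubst s C)
  | Or B C => Or (fsubst s B) (fsubst s C)
  | All B => All (fsubst (up s) B)
  | Ex B => Ex (fsubst (up s) B)
  end.

Definition lift (A : form) : form := fsubst (fun n => var (S n)) A.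

Definition subst0 (t : term) (A : form) : form :=
  fsubst (fun n => match n with 0 => t | S k => var k end) A.

Definition substS (A : form) : form :=
  fsubst (fun n => match n with 0 => succ (var 0) | S k => var (S k) end) A.

(* Axioms of HA (open formulas; free variables are implicitly universal,
   thanks to the quantifier rules). *)
Inductive HAax : form -> Prop :=
| ax_refl : forall t, HAax (Atom (Eq t t))
| ax_leibniz : forall t s A,
    HAax (Imp (Atom (Eq t s)) (Imp (subst0 t A) (subst0 s A)))
| ax_succ_ne0 : forall t, HAax (Not (Atom (Eq (succ t) zero)))
| ax_succ_inj : forall t s,
    HAax (Imp (Atom (Eq (succ t) (succ s))) (Atom (Eq t s)))
| ax_plus0 : forall t, HAax (Atom (Eq (plus t zero) t))
| ax_plusS : forall t s, HAax (Atom (Eq (plus t (succ s)) (succ (plus t s))))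
| ax_mult0 : forall t, HAax (Atom (Eq (mult t zero) zero))
| ax_multS : forall t s, HAax (Atom (Eq (mult t (succ s)) (plus (mult t s) t)))
(* the complementary predicate: P^bot <-> ~P *)
| ax_neq1 : forall t s, HAax (Imp (Atom (Neq t s)) (Not (Atom (Eq t s))))
| ax_neq2 : forall t s, HAax (Imp (Not (Atom (Eq t s))) (Atom (Neq t s)))
| ax_ind : forall A,
    HAax (Imp (subst0 zero A) (Imp (All (Imp A (substS A))) (All A))).

Definition MRK (p : atom) : form :=
  Imp (Not (All (Atom p))) (Ex (Atom (compl p))).

Inductive MRKax : form -> Prop :=
| mrk_inst : forall p, MRKax (MRK p).

(* Natural deduction derivability  Gamma |- A, over extra axioms [ax];
   if [em] is true, the rule EM^- is available. *)
Inductive prov (ax : form -> Prop) (em : bool) : list form -> form -> Prop :=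
| p_hyp : forall G A, In A G -> prov ax em G A
| p_ax : forall G A, ax A -> prov ax em G A
| p_impI : forall G A B, prov ax em (A :: G) B -> prov ax em G (Imp A B)
| p_impE : forall G A B, prov ax em G (Imp A B) -> prov ax em G A -> prov ax em G B
| p_andI : forall G A B, prov ax em G A -> prov ax em G B -> prov ax em G (And A B)
| p_andE1 : forall G A B, prov ax em G (And A B) -> prov ax em G A
| p_andE2 : forall G A B, prov ax em G (And A B) -> prov ax em G B
| p_orI1 : forall G A B, prov ax em G A -> prov ax em G (Or A B)
| p_orI2 : forall G A B, prov ax em G B -> prov ax em G (Or A B)
| p_orE : forall G A B C, prov ax em G (Or A B) ->
    prov ax em (A :: G) C -> prov ax em (B :: G) C -> prov ax em G C
| p_botE : forall G A, prov ax em G Bot -> prov ax em G A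
| p_allI : forall G A, prov ax em (map lift G) A -> prov ax em G (All A)
| p_allE : forall G A t, prov ax em G (All A) -> prov ax em G (subst0 t A)
| p_exI : forall G A t, prov ax em G (subst0 t A) -> prov ax em G (Ex A)
| p_exE : forall G A B, prov ax em G (Ex A) ->
    prov ax em (A :: map lift G) (lift B) -> prov ax em G B
| p_EMminus : forall G A p, em = true ->
    prov ax em (A :: G) (Ex (Atom p)) ->
    prov ax em (Not A :: G) (Ex (Atom p)) ->
    prov ax em G (Ex (Atom p)).

Definition HA_EM (G : list form) (A : form) : Prop := prov HAax true G A.

Definition HA_MRK (G : list form) (A : form) : Prop :=
  prov (fun B => HAax B \/ MRKax B) false G A.

(* Main.v *)
Require Import Defs.
From Stdlib Require Import List.
Import ListNotations.

Lemma tsubst_comp s r t : tsubst s (tsubst r t) = tsubst (fun n => tsubst s (r n)) t.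
Proof. induction t; simpl; congruence. Qed.

Lemma tsubst_ext s r t : (forall n, s n = r n) -> tsubst s t = tsubst r t.
Proof. intro H; induction t; simpl; congruence. Qed.

Lemma tsubst_id t : tsubst var t = t.
Proof. induction t; simpl; congruence. Qed.

Lemma key1 t : tsubst (fun n => match n with 0 => var 0 | S k => var k end)
                 (tsubst (up (fun n => var (S n))) t) = t.
Proof.
  rewrite tsubst_comp. rewrite <- (tsubst_id t) at 2. apply tsubst_ext.
  intros [|n]; reflexivity.
Qed.

Lemma key2 t u : tsubst (fun n => match n with 0 => u | S k => var k end)
                 (tsubst (fun n => var (S n)) t) = t.
Proof.
  rewrite tsubst_comp. rewrite <- (tsubst_id t) at 2. apply tsubst_ext.
  intros [|n]; reflexivity.
Qed.

Lemma key1a q : subst0 (var 0) (Atom (asubst (up (fun n => var (S n))) q)) = Atom q.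
Proof. destruct q; unfold subst0; simpl; rewrite !key1; reflexivity. Qed.

Lemma compl_compl p : compl (compl p) = p.
Proof. destruct p; reflexivity. Qed.

Lemma incl_cc {X} (a : X) G G' : incl G G' -> incl (a :: G) (a :: G').
Proof. intros H x [->|Hx]; [left; auto | right; auto]. Qed.

Lemma weaken ax em G A : prov ax em G A -> forall G', incl G G' -> prov ax em G' A.
Proof.
  induction 1; intros G' Hi.
  - apply p_hyp; auto.
  - apply p_ax; auto.
  - apply p_impI; apply IHprov, incl_cc; auto.
  - eapply p_impE; eauto.
  - apply p_andI; eauto.
  - eapply p_andE1; eauto.
  - eapply p_andE2; eauto.
  - apply p_orI1; eauto.
  - apply p_orI2; eauto.
  - eapply p_orE; [eauto | apply IHprov2, incl_cc; auto | apply IHprov3, incl_cc; auto].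
  - apply p_botE; eauto.
  - apply p_allI; apply IHprov, incl_map; auto.
  - apply p_allE; eauto.
  - eapply p_exI; eauto.
  - eapply p_exE; [eauto | apply IHprov2, incl_cc, incl_map; auto].
  - eapply p_EMminus; [auto | apply IHprov1, incl_cc; auto | apply IHprov2, incl_cc; auto].
Qed.

Ltac hyp := apply p_hyp; simpl; tauto.

Lemma part1 p : HA_EM [] (MRK p).
Proof.
  unfold HA_EM, MRK. apply p_impI.
  apply p_EMminus with (A := Ex (Atom (compl p))); [reflexivity| hyp |].
  apply p_botE. apply p_impE with (A := All (Atom p)); [hyp|]. apply p_allI. simpl map.
  match goal with |- prov _ _ ?X _ => set (G := X) end.
  assert (L : prov HAax true G (Not (Atom (compl p)))).
  { apply p_impI. eapply p_impE; [apply p_hyp; subst G; simpl; right; left; reflexivity|].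
    apply p_exI with (t := var 0). rewrite key1a. hyp. }
  assert (M : prov HAax true (Not (Atom (compl p)) :: G) (Atom p)).
  { destruct p as [t s|t s]; simpl.
    - apply p_exE with (A := Atom (Eq (tsubst (fun n => var (S n)) t) (tsubst (fun n => var (S n)) s))).
      + apply p_EMminus with (A := Atom (Eq t s)); [reflexivity| |].
        * apply p_exI with (t := zero). unfold subst0; simpl; rewrite !key2. hyp.
        * apply p_botE. apply p_impE with (A := Atom (Neq t s)); [hyp|].
          eapply p_impE; [apply p_ax; apply ax_neq2|]. hyp.
      + hyp.
    - eapply p_impE; [apply p_ax; apply ax_neq2|]. hyp. }
  eapply p_impE; [apply p_impI; exact M| exact L].
Qed.

Section P2.
Variable ax : form -> Prop.
Variable em : bool.
Hypothesis axH : forall B, HAax B -> ax B.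
Hypothesis axM : forall B, MRKax B -> ax B.

Lemma part2 G A p :
  prov ax em (A :: G) (Ex (Atom p)) -> prov ax em (Not A :: G) (Ex (Atom p)) ->
  prov ax em G (Ex (Atom p)).
Proof.
  intros H1 H2.
  rewrite <- (compl_compl p) at 1.
  eapply p_impE; [apply p_ax, axM, (mrk_inst (compl p))|].
  apply p_impI. set (H := All (Atom (compl p))).
  assert (K : prov ax em (H :: G) (Not (Ex (Atom p)))).
  { apply p_impI. apply p_exE with (A := Atom p) (B := Bot); [hyp|].
    assert (Q : prov ax em (Atom p :: map lift (Ex (Atom p) :: H :: G)) (Atom (compl p))).
    { replace (Atom (compl p)) with (subst0 (var 0) (Atom (asubst (up (fun n => var (S n))) (compl p)))) by apply key1a. apply p_allE. apply p_hyp. simpl. right; right; left. reflexivity. }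
    destruct p as [t s|t s]; simpl in Q |- *.
    - eapply p_impE; [eapply p_impE; [apply p_ax, axH, ax_neq1 | exact Q]|]. hyp.
    - eapply p_impE; [eapply p_impE; [apply p_ax, axH, ax_neq1 | ]|]; [hyp| exact Q]. }
  assert (N : prov ax em (H :: G) (Not A)).
  { apply p_impI. eapply p_impE.
    - eapply weaken; [exact K|]. intros x Hx; simpl; tauto.
    - eapply weaken; [exact H1|]. intros x Hx; simpl in *; tauto. }
  eapply p_impE; [|exact N].
  apply p_impI. eapply p_impE.
  - eapply weaken; [exact K|]. intros x Hx; simpl; tauto.
  - eapply weaken; [exact H2|]. intros x Hx; simpl in *; tauto.
Qed.
End P2.

Theorem mainTheorem7 :
  (forall p : atom, HA_EM [] (MRK p)) /\
  (forall (G : list form) (A : form) (p : atom),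
      HA_MRK (A :: G) (Ex (Atom p)) ->
      HA_MRK (Not A :: G) (Ex (Atom p)) ->
      HA_MRK G (Ex (Atom p))).
Proof.
  split; [exact part1|].
  intros G A p. unfold HA_MRK. apply part2; auto.
Qed.
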